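(* Let $q$ be a positive integer and $I\subseteq\{0,1,\dots,q-1\}$, with complement $I^c=\{0,1,\dots,q-1\}\setminus I$. Let $k_1,k_2\ge0$, $p_i\ge 0$ ($1\le i\le k_1$), $q_i\ge0$ ($1\le i\le k_2$) be integers and $s_i,a_{ij},t_i,b_{ij},a,\nu$ integers (empty sums are $0$). Let $B(n)=\lceil n/q\rceil$. Then $$B(n)=\sum_{i=1}^{k_1}B\Big(n-s_i-\sum_{j=1}^{p_i}B(n-a_{ij})\Big)+\sum_{i=1}^{k_2}B\Big(-t_i+\sum_{j=1}^{q_i}B(n-b_{ij})\Big)+B\Big(n-a-\sum_{j\in I}B(n-j)\Big)+\nu$$ holds for all integers $n$ if and only if $$B(n)=\sum_{i=1}^{k_1}B\Big(n-s_i-\sum_{j=1}^{p_i}B(n-a_{ij})\Big)+\sum_{i=1}^{k_2}B\Big(-t_i+\sum_{j=1}^{q_i}B(n-b_{ij})\Big)+B\Big(-a+\sum_{j\in I^c}B(n-j)\Big)+\nu$$ holds for all integers $n$.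
   Context: Equivalently: $\lceil n/q\rceil$ formally satisfies the first recursion (with a Conolly-type term $R(n-a-\sum_{j\in I}R(n-j))$) if and only if it formally satisfies the second (with the Conway-type term $R(-a+\sum_{j\notin I}R(n-j))$), where formal satisfaction means the equation holds for all integers $n$ after substituting $\lceil \cdot/q\rceil$ for $R$. *)

(* Defs.v *)
From Stdlib Require Import ZArith List.
Import ListNotations.
Open Scope Z_scope.

(* ceiling division: ceil(n/q) for q > 0 (Z.div rounds toward -infinity) *)
Definition ceilq (q n : Z) : Z := - ((- n) / q).

Definition sumZ (l : list Z) : Z := fold_right Z.add 0 l.

Definition sum_range_filter (q : nat) (P : nat -> bool) (f : Z -> Z) : Z :=
  sumZ (map (fun j => f (Z.of_nat j)) (filter P (seq 0 q))).

Definition common_part (B : Z -> Z)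
  (A : list (Z * list Z)) (T : list (Z * list Z)) (n : Z) : Z :=
  sumZ (map (fun sa => B (n - fst sa - sumZ (map (fun aij => B (n - aij)) (snd sa)))) A)
  + sumZ (map (fun tb => B (- fst tb + sumZ (map (fun bij => B (n - bij)) (snd tb)))) T).

(* Main.v *)
Require Import Defs.
From Stdlib Require Import ZArith List Lia.
Import ListNotations.
Open Scope Z_scope.

Lemma sumZ_app l1 l2 : sumZ (l1 ++ l2) = sumZ l1 + sumZ l2.
Proof. induction l1; simpl; [lia|]. unfold sumZ in *; simpl. lia. Qed.

Lemma split_filter (P : nat -> bool) (f : Z -> Z) l :
  sumZ (map (fun j => f (Z.of_nat j)) (filter P l))
  + sumZ (map (fun j => f (Z.of_nat j)) (filter (fun j => negb (P j)) l))
  = sumZ (map (fun j => f (Z.of_nat j)) l).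
Proof.
  induction l as [|x l IH]; simpl; [reflexivity|].
  destruct (P x); simpl; unfold sumZ in *; simpl; lia.
Qed.

Lemma term (q m r : Z) (j : Z) : 0 < q -> 0 <= r < q -> 0 <= j < q ->
  ceilq q (q*m + r - j) = m + (if j <? r then 1 else 0).
Proof.
  intros Hq Hr Hj. unfold ceilq.
  replace (- (q*m + r - j)) with ((j - r) + (-m) * q) by lia.
  rewrite Z.div_add by lia.
  destruct (Z.ltb_spec j r).
  - assert ((j - r) / q = -1) as E.
    { symmetry. apply Z.div_unique with (r := j - r + q); lia. }
    rewrite E; lia.
  - rewrite Z.div_small by lia. lia.
Qed.

Lemma hermite_k (q : nat) (m r : Z) : (0 < q)%nat -> 0 <= r < Z.of_nat q ->
  forall k, (k <= q)%nat ->
  sumZ (map (fun j => ceilq (Z.of_nat q) (Z.of_nat q * m + r - Z.of_nat j)) (seq 0 k))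
  = Z.of_nat k * m + Z.min (Z.of_nat k) r.
Proof.
  intros Hq Hr k. induction k as [|k IH]; intros Hk.
  - simpl. unfold sumZ; simpl. lia.
  - rewrite seq_S, map_app, sumZ_app, IH by lia. rewrite Nat2Z.inj_succ. cbn [map].
    rewrite term by lia. unfold sumZ; simpl.
    destruct (Z.ltb_spec (Z.of_nat k) r); lia.
Qed.

Lemma hermite (q : nat) (n : Z) : (0 < q)%nat ->
  sumZ (map (fun j => ceilq (Z.of_nat q) (n - Z.of_nat j)) (seq 0 q)) = n.
Proof.
  intros Hq.
  pose proof (Z.div_mod n (Z.of_nat q) ltac:(lia)) as D.
  pose proof (Z.mod_pos_bound n (Z.of_nat q) ltac:(lia)) as B.
  set (m := n / Z.of_nat q) in *. set (r := n mod Z.of_nat q) in *.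
  rewrite D at 1.
  erewrite map_ext.
  2:{ intros j. rewrite D at 1. reflexivity. }
  rewrite hermite_k by lia. lia.
Qed.
Theorem theorem7 (q : nat) (hq : (0 < q)%nat) (inI : nat -> bool)
  (A T : list (Z * list Z)) (a nu : Z) :
  (forall n : Z,
     ceilq (Z.of_nat q) n =
       common_part (ceilq (Z.of_nat q)) A T n
       + ceilq (Z.of_nat q)
           (n - a - sum_range_filter q inI (fun j => ceilq (Z.of_nat q) (n - j)))
       + nu)
  <->
  (forall n : Z,
     ceilq (Z.of_nat q) n =
       common_part (ceilq (Z.of_nat q)) A T n
       + ceilq (Z.of_nat q)
           (- a + sum_range_filter q (fun j => negb (inI j))
                    (fun j => ceilq (Z.of_nat q) (n - j)))
       + nu).
Proof.
  assert (K : forall n, n - a - sum_range_filter q inI (fun j => ceilq (Z.of_nat q) (n - j))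
     = - a + sum_range_filter q (fun j => negb (inI j)) (fun j => ceilq (Z.of_nat q) (n - j))).
  { intros n. unfold sum_range_filter.
    pose proof (split_filter inI (fun j => ceilq (Z.of_nat q) (n - j)) (seq 0 q)) as S.
    cbv beta in S. rewrite (hermite q n hq) in S. lia. }
  split; intros H n; rewrite H; rewrite K; reflexivity.
Qed.
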